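(* If a complex number $\alpha$ can be computed by a radical computation tree and $K$ is the splitting field of an irreducible polynomial over $\mathbf{Q}$ having $\alpha$ as one of its roots, then $\mathrm{Gal}(K/\mathbf{Q})$ does not contain the symmetric group $S_n$ as a subgroup for any $n\ge 5$.
   Context: An algebraic computation tree is a rooted tree whose computation nodes compute a value as the sum, difference, product or quotient of integer constants and values computed at ancestor nodes, and whose decision nodes test whether a computed value is greater than zero and branch. A radical computation tree additionally allows computing the $k$-th root of a previously computed value ($k$ an integer parameter) and complex conjugation. A value is computed by the tree if it is computed at some node. *)

(* Defs.v *)
(* Complex numbers are modelled by algC (algebraic complex
   numbers); every value computed by a radical computation tree is algebraic. *)
From HB Require Import structures.
From mathcomp Require Import all_boot all_order all_algebra all_fingroup all_field.
Set Implicit Arguments. Unset Strict Implicit. Unset Printing Implicit Defensive.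
Import Order.TTheory GRing.Theory Num.Theory.
Local Open Scope ring_scope.

(* Operands of arithmetic nodes: an integer constant, or the value computed at
   the i-th computation node on the path from the root (ancestors, in order). *)
Inductive operand := Cst of int | Anc of nat.

Inductive arith_op := OAdd | OSub | OMul | ODiv.

Inductive rtree :=
  | Leaf
  | Arith of arith_op & operand & operand & rtree
  | Root of nat & nat & rtree        (* k-th root of the i-th ancestor value *)
  | Conj of nat & rtree              (* conjugate of the i-th ancestor value *)
  | Dec of nat & rtree & rtree.      (* branch on (i-th ancestor value > 0) *)

Definition anc_val (vals : seq algC) (i : nat) : option algC :=
  if (i < size vals)%N then Some (nth 0 vals i) else None.

Definition opnd_val (vals : seq algC) (u : operand) : option algC :=
  match u with Cst z => Some (z%:~R) | Anc i => anc_val vals i end.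

Definition arith_val (o : arith_op) (x y : algC) : option algC :=
  match o with
  | OAdd => Some (x + y)
  | OSub => Some (x - y)
  | OMul => Some (x * y)
  | ODiv => if y != 0 then Some (x / y) else None
  end.

(* [rt k x] is the k-th root chosen by the tree; see the hypothesis in the theorem. *)
Definition node_val (rt : nat -> algC -> algC) (vals : seq algC)
  (o : arith_op) (u v : operand) : option algC :=
  match opnd_val vals u, opnd_val vals v with
  | Some x, Some y => arith_val o x y
  | _, _ => None
  end.

(* A node whose operation is undefined (division by 0, bad index, k = 0)
   computes nothing, nor do its descendants. *)
Fixpoint computed_in (rt : nat -> algC -> algC) (vals : seq algC)
    (t : rtree) (a : algC) : Prop :=
  match t with
  | Leaf => False
  | Arith o u v t' =>
      match node_val rt vals o u v with
      | Some y => y = a \/ computed_in rt (rcons vals y) t' a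
      | None => False
      end
  | Root k i t' =>
      match anc_val vals i with
      | Some x => if (0 < k)%N then
                    let y := rt k x in y = a \/ computed_in rt (rcons vals y) t' a
                  else False
      | None => False
      end
  | Conj i t' =>
      match anc_val vals i with
      | Some x => let y := x^* in y = a \/ computed_in rt (rcons vals y) t' a
      | None => False
      end
  | Dec _ t1 t2 => computed_in rt vals t1 a \/ computed_in rt vals t2 a
  end.

Definition computed_by (rt : nat -> algC -> algC) (t : rtree) (a : algC) : Prop :=
  computed_in rt [::] t a.

(* Main.v *)
Require Import Defs.
From HB Require Import structures.
From mathcomp Require Import all_boot all_order all_algebra all_fingroup all_solvable all_field.
From mathcomp Require Import ring.
Import GRing.Theory Num.Theory.
Local Open Scope ring_scope.

Section Emb.
Variable L : fieldExtType rat.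

Definition toQ (p : {poly L}) : {poly rat} := map_poly (coord [tuple 1] 0) p.

Lemma toQK p : p \is a polyOver 1%VS -> map_poly (in_alg L) (toQ p) = p.
Proof.
move=> /allP Qp; rewrite /toQ -map_poly_comp map_poly_id // => _ /Qp/vlineP[a ->] /=.
by rewrite linearZ /= (coord_free 0) ?mulr1 // seq1_free ?oner_eq0.
Qed.

Lemma toQ_map q : toQ (map_poly (in_alg L) q) = q.
Proof.
apply: (map_poly_inj (in_alg L)); rewrite toQK //.
by apply/polyOver1P; exists q.
Qed.

Lemma embed_algC : {rmorphism L -> algC}.
Proof.
have pc : [pchar L] =i pred0 by move=> p; rewrite pchar_lalg pchar_num.
have sepL : separable 1 {:L} by apply/separableP => x _; exact: pcharf0_separable.
set g := separable_generator 1 {:L}.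
have defL : {:L}%VS = <<1; g>>%VS := eq_adjoin_separable_generator sepL (sub1v _).
set q := toQ (minPoly 1 g).
have Dq : map_poly (in_alg L) q = minPoly 1 g by rewrite toQK // minPolyOver.
have : size (map_poly (ratr : rat -> algC) q) != 1.
  by rewrite size_map_poly -(size_map_poly (in_alg L)) Dq size_minPoly.
move=> /closed_rootP/sigW[c qc].
pose F x := toQ (Fadjoin_poly 1 g x).
have DF x : map_poly (in_alg L) (F x) = Fadjoin_poly 1 g x.
  by rewrite toQK // Fadjoin_polyOver.
have Fx x : (map_poly (in_alg L) (F x)).[g] = x.
  by rewrite DF Fadjoin_poly_eq // -defL memvf.
pose LC x := (map_poly ratr (F x)).[c].
have LCa : zmod_morphism LC.
  move=> x y; have FB : F (x - y) = F x - F y.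
    apply: (map_poly_inj (in_alg L)); rewrite rmorphB !DF.
    by rewrite linearB; congr (_ - _); exact: (esym (DF _)).
  by rewrite /LC FB rmorphB hornerD hornerN.
have FM x y : F (x * y) = (F x * F y) %% q.
  apply: (map_poly_inj (in_alg L)); rewrite map_modp rmorphM Dq DF.
  rewrite -Fadjoin_poly_mod; last by rewrite rpredM ?alg_polyOver.
  by rewrite hornerM !Fx.
have LCm : monoid_morphism LC.
  split.
    rewrite /LC /F Fadjoin_polyC ?mem1v //.
    have -> : toQ (1 : L)%:P = 1.
      apply: (map_poly_inj (in_alg L)); rewrite toQK ?rmorph1 //.
      by rewrite polyOverC mem1v.
    by rewrite rmorph1 hornerC.
  move=> x y; rewrite /LC FM -hornerM -rmorphM.
  rewrite [in RHS](divp_eq (F x * F y) q) rmorphD rmorphM hornerD hornerM.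
  by move/rootP: qc => ->; rewrite mulr0 add0r.
pose LCaM := GRing.isZmodMorphism.Build _ _ LC LCa.
pose LCmM := GRing.isMonoidMorphism.Build _ _ LC LCm.
exact: (HB.pack LC LCaM LCmM).
Qed.
End Emb.

Lemma map_inalg_num (Qs : fieldExtType rat) (R : numFieldType) (f : {rmorphism Qs -> R}) q :
  map_poly f (map_poly (in_alg Qs) q) = map_poly ratr q.
Proof.
rewrite -map_poly_comp; apply: eq_map_poly => a /=.
by rewrite alg_num_field fmorph_rat.
Qed.

Lemma normal_num_field (s : seq algC) (m : nat) : (0 < m)%N ->
  {N : splittingFieldType rat & {NC : {rmorphism N -> algC} |
     (forall x, x \in s -> exists y, NC y = x) /\ exists z : N, m.-primitive_root z}}.
Proof.
move=> m_gt0.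
pose mq x := sval (minCpolyP x).
have mqP x : map_poly ratr (mq x) = minCpoly x /\ mq x \is monic.
  by rewrite /mq; case: (minCpolyP x) => q [] /=.
pose P := \prod_(x <- s) mq x * ('X^m - 1).
have monP : P \is monic.
  rewrite monicMr ?monic_Xn_sub_1 // monic_prod // => x _; exact: (mqP x).2.
have [r Dr] := closed_field_poly_normal (map_poly (ratr : rat -> algC) P).
rewrite lead_coef_map (monicP monP) rmorph1 scale1r in Dr.
have inr x : root (map_poly ratr P) x -> x \in r by rewrite Dr root_prod_XsubC.
have [N0 [NC [s1 Ds1 gen]]] := num_field_exists r.
have Qn_ax : FieldExt_isSplittingField _ N0.
  constructor; exists (map_poly (in_alg N0) P); first exact: alg_polyOver.
  exists s1 => //.
  suff -> : map_poly (in_alg N0) P = \prod_(z <- s1) ('X - z%:P) by rewrite eqpxx.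
  apply: (map_poly_inj NC); rewrite map_inalg_num Dr -Ds1 big_map rmorph_prod.
  by apply: eq_bigr => y _; rewrite rmorphB /= map_polyX map_polyC.
pose N : splittingFieldType rat := HB.pack_for (splittingFieldType rat) N0 Qn_ax.
exists N, NC; split.
  move=> x sx; have : x \in r.
    apply: inr; rewrite /P rmorphM rootM; apply/orP; left.
    rewrite (big_rem x sx) /= rmorphM rootM; apply/orP; left.
    by have [Dm _] := mqP x; move: (root_minCpoly x); rewrite -Dm.
  by rewrite -Ds1 => /mapP[y _ ->]; exists y.
have [w pw] := C_prim_root_exists m_gt0.
have : w \in r.
  apply: inr; rewrite /P rmorphM rootM; apply/orP; right.
  rewrite rmorphB rmorphXn /= map_polyX rmorph1 rootE !hornerE.
  by rewrite (prim_expr_order pw) subrr.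
rewrite -Ds1 => /mapP[y _ Dy]; exists y.
by rewrite -(fmorph_primitive_root NC) -Dy.
Qed.

Definition astep (rt : nat -> algC -> algC) (m : nat) (prev : seq algC) (y : algC) : Prop :=
  (exists o u v, node_val rt prev o u v = Some y)
  \/ (exists k i, (0 < k)%N /\ (k %| m)%N /\ anc_val prev i = Some (y ^+ k))
  \/ (exists i x, anc_val prev i = Some x /\ y = x^*).

Lemma astep_dvd rt m m' prev y : astep rt m prev y -> (m %| m')%N -> astep rt m' prev y.
Proof.
move=> [H|[[k [i [k0 [km H]]]]|H]] mm'; [by left|right;left|by right;right].
by exists k, i; split; rewrite ?(dvdn_trans km mm').
Qed.

Definition steps_ok rt m vals ws :=
  forall j, (j < size ws)%N -> astep rt m (vals ++ take j ws) (nth 0 ws j).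

Lemma steps_cons rt m vals y ws :
  astep rt m vals y -> steps_ok rt m (rcons vals y) ws -> steps_ok rt m vals (y :: ws).
Proof.
move=> Hy Hws [|j] /=; first by rewrite cats0.
by rewrite ltnS => /Hws; rewrite -cat_rcons.
Qed.

Lemma steps_dvd rt m m' vals ws : steps_ok rt m vals ws -> (m %| m')%N -> steps_ok rt m' vals ws.
Proof. by move=> H mm' j /H /astep_dvd; apply. Qed.

Lemma extract rt (rt_root : forall (k : nat) (x : algC), (0 < k)%N -> rt k x ^+ k = x) t :
  forall vals a, computed_in rt vals t a ->
  exists m ws, [/\ (0 < m)%N, steps_ok rt m vals ws & a \in ws].
Proof.
elim: t => [//| o u v t IH | k i t IH | i t IH | i t1 IH1 t2 IH2] vals a /=.
- case E: node_val => [y|] // [<-|H].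
    exists 1%N, [:: y]; split; rewrite ?inE ?eqxx //.
    by apply: steps_cons => [|[]//]; left; exists o, u, v.
  have [m [ws [m0 Hws aws]]] := IH _ _ H.
  exists m, (y :: ws); split; rewrite ?inE ?aws ?orbT //.
  by apply: steps_cons => //; left; exists o, u, v.
- case E: anc_val => [x|] //; case: ifP => // k0 [<-|H].
    exists k, [:: rt k x]; split; rewrite ?inE ?eqxx //.
    apply: steps_cons => [|[]//]; right; left; exists k, i.
    by rewrite rt_root.
  have [m [ws [m0 Hws aws]]] := IH _ _ H.
  exists (k * m)%N, (rt k x :: ws); split; rewrite ?inE ?aws ?orbT ?muln_gt0 ?k0 //.
  apply: steps_cons; last by apply: steps_dvd Hws _; apply: dvdn_mull.
  by right; left; exists k, i; rewrite rt_root // dvdn_mulr.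
- case E: anc_val => [x|] // [<-|H].
    exists 1%N, [:: x^*]; split; rewrite ?inE ?eqxx //.
    by apply: steps_cons => [|[]//]; right; right; exists i, x.
  have [m [ws [m0 Hws aws]]] := IH _ _ H.
  exists m, (x^* :: ws); split; rewrite ?inE ?aws ?orbT //.
  by apply: steps_cons => //; right; right; exists i, x.
- by case=> [/IH1|/IH2].
Qed.

Section Tower.
Variable N : splittingFieldType rat.

Lemma gal_fix (E : {subfield N}) (x : gal_of {:N}) :
  (forall a, a \in E -> x a = a) -> x \in 'Gal({:N} / E)%g.
Proof. by move=> H; rewrite gal_kHom ?subvf //; apply/kAHomP. Qed.

Lemma galMf (x y : gal_of {:N}) a : (x * y)%g a = y (x a).
Proof. exact: galM (memvf a). Qed.

Lemma galVf (x : gal_of {:N}) a : x ((x^-1)%g a) = a.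
Proof. by rewrite -galMf mulVg gal_id. Qed.

Lemma galXf (x : gal_of {:N}) a n : x (a ^+ n) = (x a) ^+ n.
Proof. exact: rmorphXn. Qed.

Lemma galMulf (x : gal_of {:N}) a b : x (a * b) = x a * x b.
Proof. exact: rmorphM. Qed.

Lemma kummer_comm (E : {subfield N}) (ys : seq N) :
  (forall y, y \in ys -> exists k, [/\ (0 < k)%N, y ^+ k \in E & exists2 w, w \in E & k.-primitive_root w]) ->
  ([~: 'Gal({:N} / E), 'Gal({:N} / E)] \subset 'Gal({:N} / <<E & ys>>%AS))%g.
Proof.
move=> Hys; rewrite gen_subG; apply/subsetP => _ /imset2P[g h gE hE ->].
have cE : ([~ g, h] \in 'Gal({:N} / E))%g by rewrite groupR.
apply: gal_fix; suff: (<<E & ys>>%AS <= fixedSpace [~ g, h]%g)%VS.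
  by move/subvP=> H a /H /fixedSpaceP.
apply/Fadjoin_seqP; split.
  by apply/subvP => b bE; apply/fixedSpaceP; exact: fixed_gal (subvf _) cE bE.
move=> y /Hys [k [k0 yk [w wE pw]]]; apply/fixedSpaceP.
have [-> | nz] := eqVneq y 0; first by rewrite rmorph0.
have mulE x : (x \in 'Gal({:N} / E))%g -> exists2 u, u \in E & x y = u * y.
  move=> xE.
  have : (x y / y) ^+ k = 1.
    have xyk : (x y) ^+ k = y ^+ k by rewrite -rmorphXn; exact: (fixed_gal (subvf _) xE yk).
    by rewrite exprMn xyk exprVn mulfV // expf_neq0.
  case/(prim_rootP pw) => i Di; exists (w ^+ i); first by rewrite rpredX.
  by rewrite -Di mulfVK.
have mulx x u : (x \in 'Gal({:N} / E))%g -> u \in E -> x (u * y) = u * x y.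
  by move=> xE uE; rewrite rmorphM; congr (_ * _); exact: fixed_gal (subvf _) xE uE.
have [u1 u1E D1] := mulE _ (groupVr gE).
have [u2 u2E D2] := mulE _ (groupVr hE).
have [u3 u3E D3] := mulE _ gE.
have [u4 u4E D4] := mulE _ hE.
have e13 : u1 * u3 = 1.
  by apply: (mulIf nz); rewrite mul1r -mulrA -D3 -(mulx g) // -D1 galVf.
have e24 : u2 * u4 = 1.
  by apply: (mulIf nz); rewrite mul1r -mulrA -D4 -(mulx h) // -D2 galVf.
rewrite commgEl conjgE !galMf D1 mulx ?groupV // D2 mulrA mulx ?rpredM // D3.
rewrite !mulrA mulx ?rpredM // D4 mulrA -(mulrA u1) (mulrC u2) mulrA e13 mul1r.
by rewrite e24 mul1r.
Qed.

Lemma cyc_comm (z : N) m : m.-primitive_root z ->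
  ([~: 'Gal({:N} / 1), 'Gal({:N} / 1)] \subset 'Gal({:N} / <<1; z>>%AS))%g.
Proof.
move=> pz; rewrite gen_subG; apply/subsetP => _ /imset2P[g h gE hE ->].
apply: gal_fix; suff: (<<1; z>>%AS <= fixedSpace [~ g, h]%g)%VS.
  by move/subvP=> H a /H /fixedSpaceP.
apply/FadjoinP; split; first by apply/subvP => b /vlineP[r ->]; apply/fixedSpaceP; rewrite linearZ rmorph1.
apply/fixedSpaceP.
have ex (x : gal_of {:N}) : exists i : nat, x z = z ^+ i.
  have : (x z) ^+ m = 1 by rewrite -rmorphXn (prim_expr_order pz) rmorph1.
  by case/(prim_rootP pz) => i ->; exists i.
have [a Da] := ex (g^-1)%g; have [b Db] := ex (h^-1)%g.
have [c Dc] := ex g; have [d Dd] := ex h.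
have Eg : (z ^+ c) ^+ a = z by rewrite -Dc -rmorphXn -Da; exact: galVf.
have Eh : (z ^+ d) ^+ b = z by rewrite -Dd -rmorphXn -Db; exact: galVf.
rewrite commgEl conjgE !galMf Da galXf Db !galXf Dc !galXf Dd -!exprM.
rewrite (_ : (d * (c * (b * a)) = (c * a) * (d * b))%N); last first.
  by ring.
by rewrite exprM (exprM z c a) Eg (exprM z d b) Eh.
Qed.

Definition orbitG (y : N) : seq N := [seq (gal_repr x) y | x <- enum [set: gal_of {:N}]].
Definition Wl (ts : seq N) : seq N := flatten [seq orbitG t | t <- ts].

Lemma orbitG_mem (x : gal_of {:N}) y : x y \in orbitG y.
Proof. by apply: (map_f (fun x : gal_of {:N} => x y)); rewrite mem_enum inE. Qed.

Lemma Wl_mem (x : gal_of {:N}) t ts : t \in ts -> x t \in Wl ts.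
Proof. by move=> tts; apply/flatten_mapP; exists t => //; apply: orbitG_mem. Qed.

Definition nstep m (prev : seq N) (y : N) : Prop :=
  (exists k, [/\ (0 < k)%N, (k %| m)%N & y ^+ k \in <<1 & prev>>%VS])
  \/ (exists2 x, x \in prev & exists t : gal_of {:N}, y = t x).

Lemma tower m z (pz : m.-primitive_root z) ts :
  (forall j, (j < size ts)%N -> nstep m (take j ts) (nth 0 ts j)) ->
  ('Gal({:N} / 1)^`((size ts).+1) \subset 'Gal({:N} / << <<1; z>>%AS & Wl ts>>%AS))%g.
Proof.
elim/last_ind: ts => [|ts y IH] Hs.
  rewrite /= derg1; apply: subset_trans (cyc_comm _ _ pz) (galS _ _).
  by apply/Fadjoin_seqP; split; [exact: subvv | move=> w; rewrite in_nil].
have Hts : forall j, (j < size ts)%N -> nstep m (take j ts) (nth 0 ts j).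
  move=> j lj; have lj' : (j < size (rcons ts y))%N by rewrite size_rcons ltnS ltnW.
  have := Hs j lj'; rewrite -cats1 takel_cat; last exact: ltnW.
  by rewrite nth_cat lj.
have Hy : nstep m ts y.
  have ls : (size ts < size (rcons ts y))%N by rewrite size_rcons ltnSn.
  have := Hs (size ts) ls; rewrite -cats1 takel_cat; last exact: leqnn.
  by rewrite take_size nth_cat ltnn subnn.
set E := << <<1; z>>%AS & Wl ts>>%AS.
have zE : z \in E.
  by apply: (subvP (subv_adjoin_seq _ _)); apply: memv_adjoin.
have WE t (x : gal_of {:N}) : t \in ts -> x t \in E.
  by move=> tts; apply: seqv_sub_adjoin; apply: Wl_mem.
rewrite size_rcons dergSn.
apply: subset_trans (commgSS (IH Hts) (IH Hts)) _.
apply: subset_trans (kummer_comm E (orbitG y) _) (galS _ _).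
  move=> w /mapP[s _ ->].
  case: Hy => [[k [k0 km yk]] | [x xts [t ->]]].
    exists k; split => //; last first.
      by exists (z ^+ (m %/ k)); [rewrite rpredX | exact: dvdn_prim_root].
    rewrite -galXf; suff : (s @: <<1 & ts>> <= E)%VS by move/subvP; apply; apply: memv_img.
    rewrite aimg_adjoin_seq aimg1; apply/Fadjoin_seqP; split; first exact: sub1v.
    by move=> _ /mapP[t tts ->]; apply: WE.
  exists 1%N; split => //; last first.
    by exists (z ^+ (m %/ 1)); [rewrite rpredX | exact: dvdn_prim_root (dvd1n m)].
  by rewrite expr1 -galMf; apply: WE.
apply/Fadjoin_seqP; split.
  by apply: subv_trans (subv_adjoin_seq _ _); apply: subv_adjoin_seq.
move=> w; rewrite /Wl map_rcons -cats1 flatten_cat mem_cat => /orP[wW|wO].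
  by apply: (subvP (subv_adjoin_seq _ _)); apply: seqv_sub_adjoin.
by apply: seqv_sub_adjoin; move: wO; rewrite /= cats0.
Qed.
End Tower.

Arguments toQ {L} p.
Arguments toQK {L} p _.

Lemma lift_seq (T : Type) (f : T -> algC) (s : seq algC) :
  (forall x, x \in s -> exists y, f y = x) -> exists ts, map f ts = s.
Proof.
elim: s => [|x s IH] H; first by exists [::].
have [y Dy] := H x (mem_head _ _).
have [ts Dts] : exists ts, map f ts = s by apply: IH => x0 sx0; apply: H; rewrite inE sx0 orbT.
by exists (y :: ts); rewrite /= Dy Dts.
Qed.

Lemma astep_nstep (N : splittingFieldType rat) (NC : {rmorphism N -> algC})
  (tau : gal_of {:N}) (Dtau : forall a, NC (tau a) = (NC a)^*)
  rt m (prev : seq N) (y : N) :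
  astep rt m (map NC prev) (NC y) -> nstep N m prev y.
Proof.
have ancP i x : anc_val (map NC prev) i = Some x ->
    exists2 t, t \in prev & x = NC t.
  rewrite /anc_val size_map; case: ifP => // lt [<-].
  by exists (nth 0 prev i); rewrite ?mem_nth // (nth_map 0).
have opP u x : opnd_val (map NC prev) u = Some x ->
    exists2 t, t \in <<1 & prev>>%VS & x = NC t.
  case: u => [z|i] /=.
    case=> <-; exists z%:~R; last by rewrite rmorph_int.
    by rewrite rpred_int.
  by case/ancP => t tp ->; exists t => //; apply: seqv_sub_adjoin.
case=> [[o [u [v Hn]]]|[[k [i [k0 [km H]]]]|[i [x [H Dx]]]]].
- move: Hn; rewrite /node_val; case Eu: opnd_val => [x1|] //; case Ev: opnd_val => [x2|] //.
  have [t1 t1P ->] := opP _ _ Eu; have [t2 t2P ->] := opP _ _ Ev.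
  move=> Hn; left; exists 1%N; split; rewrite ?dvd1n ?expr1 //.
  move: Hn; case: o => /=.
  + by case=> /esym; rewrite -rmorphD => /fmorph_inj ->; rewrite rpredD.
  + by case=> /esym; rewrite -rmorphB => /fmorph_inj ->; rewrite rpredB.
  + by case=> /esym; rewrite -rmorphM => /fmorph_inj ->; rewrite rpredM.
  + case: ifP => // _ [] /esym; rewrite -fmorph_div => /fmorph_inj ->.
    by rewrite rpredM ?rpredV.
- left; exists k; split => //.
  have [t tp] := ancP _ _ H; rewrite -rmorphXn => /fmorph_inj ->.
  exact: seqv_sub_adjoin.
- right; have [t tp Dt] := ancP _ _ H; exists t => //; exists tau.
  by apply: (fmorph_inj NC); rewrite Dtau Dx Dt.
Qed.

Lemma rootsF (N : splittingFieldType rat) (NC : {rmorphism N -> algC}) (a : N)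
  (E : {subfield N}) (WE : forall x : gal_of {:N}, x a \in E)
  (p : {poly rat}) (p_irr : irreducible_poly p) (p_a : root (map_poly ratr p) (NC a)) :
  forall b, root (map_poly ratr p) b -> exists2 c, c \in E & NC c = b.
Proof.
pose mp := minPoly 1%AS a.
have Dmr : map_poly (in_alg N) (toQ mp) = mp by rewrite toQK // minPolyOver.
have pa : root (map_poly (in_alg N) p) a by rewrite -(fmorph_root NC) map_inalg_num.
have mr_p : toQ mp %| p.
  by rewrite -(dvdp_map (in_alg N)) Dmr; apply: minPoly_dvdp (alg_polyOver _ _) pa.
have szmr : size (toQ mp) != 1.
  by rewrite -(size_map_inj_poly (fmorph_inj (in_alg N))) ?rmorph0 // Dmr size_minPoly.
have eqp : toQ mp %= p := p_irr.2 _ szmr mr_p.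
move=> b pb.
have rb : root (map_poly NC mp) b.
  rewrite -Dmr map_inalg_num; rewrite (eqp_root (_ : _ %= map_poly ratr p)) //.
  by rewrite eqp_map.
have [rs /eqP Drs] := splitting_field_normal 1 a.
have : b \in map NC rs.
  rewrite -root_prod_XsubC big_map; move: rb; rewrite /mp Drs rmorph_prod.
  by rewrite (eq_bigr (fun y => 'X - (NC y)%:P)) // => y _; rewrite rmorphB /= map_polyX map_polyC.
case/mapP => r rrs ->.
have rr : root mp r by rewrite /mp Drs root_prod_XsubC.
have [g _ gr] := normalField_root_minPoly (sub1v _) (normalFieldf 1) (memvf a) rr.
by exists r; rewrite // -gr WE.
Qed.

Lemma galT (N : splittingFieldType rat) (y : gal_of {:N}) : (y \in 'Gal({:N} / 1))%g.
Proof. by rewrite gal_kHom ?subvf // k1HomE ahomWin. Qed.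

Lemma gal_of_lrm (N : splittingFieldType rat) (f : {lrmorphism N -> N}) :
  {y : gal_of {:N} | forall b, y b = f b}.
Proof.
exists (gal {:N} (linfun_ahom f)) => b.
by rewrite galK ?subvf ?memvf //= lfunE.
Qed.

Section Lift.
Variables (L : splittingFieldType rat) (K : {subfield L}) (N : splittingFieldType rat)
  (LC : {rmorphism L -> algC}) (NC : {rmorphism N -> algC}).

Definition Rl (x : gal_of K) (y : gal_of {:N}) : Prop :=
  forall a b, a \in K -> (LC a = NC b <-> LC (x a) = NC (y b)).

Lemma Rl1 : Rl 1%g 1%g.
Proof. by move=> a b aK; rewrite !gal_id. Qed.

Lemma RlM x1 y1 x2 y2 : Rl x1 y1 -> Rl x2 y2 -> Rl (x1 * x2)%g (y1 * y2)%g.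
Proof.
move=> R1 R2 a b aK; rewrite galM // galMf.
have x1K := memv_gal x1 aK.
by split=> H; [apply/(R2 _ _ x1K)/(R1 _ _ aK) | apply/(R1 _ _ aK)/(R2 _ _ x1K)].
Qed.

Lemma RlV x y : Rl x y -> Rl x^-1%g y^-1%g.
Proof.
move=> R a b aK; have xK := memv_gal (x^-1)%g aK.
have e1 : x ((x^-1)%g a) = a by rewrite -galM // mulVg gal_id.
have e2 : y ((y^-1)%g b) = b by apply: galVf.
by have := R _ ((y^-1)%g b) xK; rewrite e1 e2 => H; split => /H.
Qed.

Lemma RlR x1 y1 x2 y2 : Rl x1 y1 -> Rl x2 y2 -> Rl [~ x1, x2]%g [~ y1, y2]%g.
Proof.
move=> R1 R2; rewrite !commgEl !conjgE.
apply: RlM; first exact: RlV.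
apply: RlM; first exact: RlV.
exact: RlM.
Qed.

Lemma Rl_prod n (c : 'I_n -> gal_of K) (d : 'I_n -> gal_of {:N}) :
  (forall i, Rl (c i) (d i)) -> Rl (\prod_i c i)%g (\prod_i d i)%g.
Proof.
elim: n c d => [|n IH] c d H; first by rewrite !big_ord0; apply: Rl1.
rewrite !big_ord_recr /=; apply: RlM (H _).
by apply: IH => i.
Qed.

Lemma lift_derived
  (base : forall x, (x \in 'Gal(K / 1))%g -> exists2 y, (y \in 'Gal({:N} / 1))%g & Rl x y) j :
  forall x, (x \in 'Gal(K / 1)^`(j))%g -> exists2 y, (y \in 'Gal({:N} / 1)^`(j))%g & Rl x y.
Proof.
elim: j => [|j IH] x; first exact: base.
rewrite dergSn => /gen_prodgP[n [c Hc ->]].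
have : forall i, exists2 d, (d \in 'Gal({:N} / 1)^`(j.+1))%g & Rl (c i) d.
  move=> i; case/imset2P: (Hc i) => g h gD hD ->.
  have [g' g'D Rg] := IH _ gD; have [h' h'D Rh] := IH _ hD.
  by exists [~ g', h']%g; [rewrite dergSn mem_commg | apply: RlR].
case/fin_all_exists2 => d dD Rd.
exists (\prod_i d i)%g; last exact: Rl_prod.
by apply: group_prod => i _; apply: dD.
Qed.
End Lift.

Theorem lemma7
  (rt : nat -> algC -> algC)
  (rt_root : forall (k : nat) (x : algC), (0 < k)%N -> rt k x ^+ k = x)
  (t : rtree) (alpha : algC) (halpha : computed_by rt t alpha)
  (p : {poly rat}) (p_irr : irreducible_poly p)
  (p_alpha : root (map_poly ratr p) alpha)
  (L : splittingFieldType rat) (K : {subfield L})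
  (K_split : splittingFieldFor 1%AS (map_poly (in_alg L) p) K)
  (n : nat) (n_ge5 : (5 <= n)%N) :
  ~ exists H : {group gal_of K},
      (H \subset 'Gal(K / 1%AS))%g /\ (H \isog [set: 'S_n])%g.
Proof.
case=> H [HG Hiso].
have [m [ws [m0 Hws aws]]] := @extract rt rt_root t [::] alpha halpha.
have [N [NC [Hin [z pz]]]] := @normal_num_field ws m m0.
have [ts Dts] := @lift_seq _ NC ws Hin.
have [tau0 Dtau0] := restrict_aut_to_normal_num_field NC Num.Def.conjC.
have [tau Dtau1] := @gal_of_lrm N tau0.
have Dtau a : NC (tau a) = (NC a)^* by rewrite Dtau1 Dtau0.
have steps : forall j, (j < size ts)%N -> nstep N m (take j ts) (nth 0 ts j).
  move=> j lj; apply: (@astep_nstep N NC tau Dtau rt m).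
  have := Hws j; rewrite -Dts size_map => /(_ lj).
  by rewrite cat0s map_take (nth_map 0).
have [a ats Da] : exists2 a, a \in ts & NC a = alpha.
  by move: aws; rewrite -Dts => /mapP[a ats ->]; exists a.
have Htow := @tower N m z pz ts steps.
set F := << <<1; z>>%AS & Wl N ts >>%AS in Htow.
have WE (x : gal_of {:N}) : x a \in F by apply: seqv_sub_adjoin; apply: Wl_mem.
have p_a : root (map_poly ratr p) (NC a) by rewrite Da.
have rF := @rootsF N NC a F WE p p_irr p_a.
pose LC := @embed_algC L.
have [rs Drs genK] := K_split.
have rsK r : r \in rs -> r \in K by rewrite -genK => rr; apply: seqv_sub_adjoin.
have rsF r : r \in rs -> exists2 c, c \in F & NC c = LC r.
  move=> rr; apply: rF; rewrite -(@map_inalg_num L _ LC) fmorph_root.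
  by rewrite (eqp_root Drs) root_prod_XsubC.
have base x : (x \in 'Gal(K / 1))%g -> exists2 y, (y \in 'Gal({:N} / 1))%g & @Rl L K N LC NC x y.
  move=> _; have [nu Dnu] := extend_algC_subfield_aut LC (gal_repr x).
  have [nu0 Dnu0] := restrict_aut_to_normal_num_field NC nu.
  have [y Dy] := @gal_of_lrm N nu0.
  exists y; first exact: galT.
  move=> b c bK; rewrite Dy Dnu0 Dnu; split; first by move->.
  exact: fmorph_inj.
have Hsol : solvable 'Gal(K / 1)%g.
  apply/derivedP; exists (size ts).+1; apply/trivgP/subsetP => x xD; rewrite inE.
  have [y yD Rxy] := @lift_derived L K N LC NC base _ x xD.
  have yF := subsetP Htow y yD.
  have fixr r : r \in rs -> x r = r.
    move=> rr; have [c cF Dc] := rsF r rr.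
    have := (Rxy r c (rsK r rr)).1 (esym Dc).
    rewrite (fixed_gal (subvf _) yF cF) Dc; exact: fmorph_inj.
  apply/gal_eqP => b bK; rewrite gal_id.
  suff : (<<1 & rs>>%VS <= fixedSpace (gal_repr x))%VS.
    by rewrite genK => /subvP/(_ b bK)/fixedSpaceP.
  apply/Fadjoin_seqP; split.
    by apply/subvP => _ /vlineP[k ->]; apply/fixedSpaceP; rewrite linearZ rmorph1.
  by move=> r rr; apply/fixedSpaceP; apply: fixr.
have := solvableS HG Hsol; rewrite (isog_sol Hiso).
by rewrite (solvable_SymF (T := 'I_n)) // card_ord.
Qed.
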